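(* Consider the downlink of a multi-RIS multi-user MIMO system in which a base station (BS) with $M$ antennas serves $U_d$ direct users and $K$ blocked users, the $k$-th blocked user ($k\in\{1,\dots,K\}$) being served only through the $k$-th reconfigurable intelligent surface (RIS), which has $N$ elements. Let $\mathbf{H}_k\in\mathbb{C}^{M\times N}$ be the BS–RIS-$k$ channel, $\mathbf{h}_{k,1}=(h_{k,1,1},\dots,h_{k,1,N})^T\in\mathbb{C}^{N}$ the RIS-$k$–user channel, and $\mathbf{h}_{d,u}\in\mathbb{C}^{M}$ the BS–direct-user-$u$ channel, all with complex normal entries, with $\mathbb{E}\{\mathbf{H}_k^H\mathbf{H}_k\}=\mathbf{R}_k$ and $\mathbb{E}\{\mathbf{H}_k^H\mathbf{H}_{k'}\}=\mathbf{0}$ for $k\neq k'$. Let $\boldsymbol{\Phi}_k=\mathrm{diag}(e^{j\phi_{k,1}},\dots,e^{j\phi_{k,N}})$, $\mathbf{g}_{k,1}=\mathbf{H}_k\boldsymbol{\Phi}_k^H\mathbf{h}_{k,1}$, $\mathbf{Q}_1=[\mathbf{g}_{1,1}\ \cdots\ \mathbf{g}_{K,1}\ \mathbf{h}_{d,1}\ \cdots\ \mathbf{h}_{d,U_d}]^H$, and use the zero-forcing beamforming matrix $\mathbf{W}_{\mathrm{ZF}}=\mathbf{Q}_1^H(\mathbf{Q}_1\mathbf{Q}_1^H)^{-1}$ (with $M\ge K+U_d$), so that the SINR of the blocked user served by RIS $k$ is $$\mathrm{SINR}_{b,k,1}=\frac{\big|\mathbf{h}_{k,1}^H\boldsymbol{\Phi}_k\mathbf{H}_k^H\mathbf{Q}_1^H(\mathbf{Q}_1\mathbf{Q}_1^H)^{-1}\mathbf{e}_k\big|^2}{\sigma^2_{k,1}},$$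 where $\mathbf{e}_k$ is the $k$-th standard unit vector and $\sigma^2_{k,1}>0$ the noise power. Then, in the asymptotic regime $M\to\infty$, the phase shifts $\phi_{k,1},\dots,\phi_{k,N}$ of the $k$-th RIS that maximize the SINR of this user can be found by solving the system of equations $$\phi_{k,i}=-\sphericalangle\Big(h_{k,1,i}^{*}\sum_{\ell=1}^{N}R_{k,i,\ell}\,e^{-j\phi_{k,\ell}}\,h_{k,1,\ell}\Big),\qquad i=1,\dots,N,$$ where $R_{k,i,\ell}$ is the $(i,\ell)$ entry of $\mathbf{R}_k$.
   Context: $\sphericalangle(z)$ denotes the argument (phase) of a complex number $z$, and $^*$ denotes complex conjugation, $^H$ conjugate transpose. In the (finite-$M$) setting the SINR-maximizing phases satisfy $\phi_{k,i}=-\sphericalangle\big(h^{*}_{k,1,i}[\mathbf{H}_k^H\mathbf{Q}_1^H(\mathbf{Q}_1\mathbf{Q}_1^H)^{-1}\mathbf{e}_k]_i\big)$; the asymptotic regime $M\to\infty$ refers to the limit in which inner products of BS-side channel columns converge to their expectations, i.e. $\mathbf{H}_k^H\mathbf{H}_n\to\mathbf{R}_k$ if $n=k$ and $\to\mathbf{0}$ if $n\neq k$. *)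

(* Defs.v *)
From HB Require Import structures.
From mathcomp Require Import all_boot all_order all_algebra.
From mathcomp Require Import complex.
From mathcomp Require Import all_classical all_reals.
From mathcomp Require Import trigo.
Set Implicit Arguments.
Unset Strict Implicit.
Unset Printing Implicit Defensive.
Import Order.TTheory GRing.Theory Num.Theory.
Local Open Scope ring_scope.
Local Open Scope complex_scope.

Section Defs.
Variable R : realType.
Local Notation C := R[i].

Definition expj (t : R) : C := Complex (cos t) (sin t).

Definition sqmod (z : C) : R := (complex.Re z) ^+ 2 + (complex.Im z) ^+ 2.

(* theta is an argument (phase) of z:  z = |z| e^{j theta}.
   For z = 0 every theta is an argument. The equation "phi = -arg z"
   of the paper is rendered as  is_arg z (- phi)  (phases mod 2 pi). *)
Definition is_arg (z : C) (t : R) : Prop := z = `|z| * expj t.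

Definition adjmx m n (A : 'M[C]_(m, n)) : 'M[C]_(n, m) := (map_mx conjc A)^T.

Definition ris_phase N (phi : 'I_N -> R) : 'M[C]_N :=
  diag_mx (\row_i expj (phi i)).

Definition herm_psd N (A : 'M[C]_N) : Prop :=
  adjmx A = A /\ forall x : 'cV[C]_N, 0 <= complex.Re ((adjmx x *m A *m x) 0 0).

(* Asymptotic (M -> oo) value of  H_k^H Q_1^H e_k-column  :
   H_k^H g_{k,1} -> R_k Phi_k^H h_{k,1}  (all other columns -> 0). *)
Definition asym_HQ N (Rk : 'M[C]_N) (phi : 'I_N -> R) (h : 'cV[C]_N)
  : 'cV[C]_N := Rk *m adjmx (ris_phase phi) *m h.

(* Asymptotic SINR of the blocked user served by RIS k:
   |h^H Phi_k (H_k^H Q_1^H)_asym ((Q_1 Q_1^H)^{-1})_{kk}|^2 / sigma^2,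
   where dkk > 0 is the (k,k) entry of (Q_1 Q_1^H)^{-1}, treated (as in the
   paper) as not depending on Phi_k. *)
Definition sinr_asym N (Rk : 'M[C]_N) (h : 'cV[C]_N) (dkk sigma2 : R)
  (phi : 'I_N -> R) : R :=
  sqmod ((adjmx h *m ris_phase phi *m asym_HQ Rk phi h) 0 0 * dkk%:C)
  / sigma2.

End Defs.

(* Main.v *)
Require Import Defs.
From HB Require Import structures.
From mathcomp Require Import all_boot all_order all_algebra.
From mathcomp Require Import complex.
From mathcomp Require Import all_classical all_reals.
From mathcomp Require Import trigo.
From mathcomp Require Import ring lra.
Import Order.TTheory GRing.Theory Num.Theory.
Local Open Scope ring_scope.
Local Open Scope complex_scope.

Set Implicit Arguments.
Unset Strict Implicit.
Section S.
Variable R : realType.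
Local Notation C := R[i].

Definition Fq N (A : 'M[C]_N) (g : 'I_N -> C) : C :=
  \sum_a \sum_b conjc (g a) * A a b * g b.

Lemma numconjE (x : C) : Num.conj x = conjc x.
Proof. by []. Qed.

Lemma expjN (a : R) : expj (- a) = conjc (expj a).
Proof. by rewrite /expj cosN sinN. Qed.

Lemma conjcM (x y : C) : conjc (x * y) = conjc x * conjc y.
Proof. by case: x => a b; case: y => c d; simpc. Qed.

Lemma conjcD (x y : C) : conjc (x + y) = conjc x + conjc y.
Proof. by case: x => a b; case: y => c d; simpc. Qed.

Lemma conjc_sum (I : finType) (P : pred I) (F : I -> C) :
  conjc (\sum_(i | P i) F i) = \sum_(i | P i) conjc (F i).
Proof. by apply: (big_morph _ conjcD); rewrite /= oppr0. Qed.

Lemma conjcKK (x : C) : conjc (conjc x) = x.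
Proof. by case: x => a b; rewrite /= opprK. Qed.

Lemma mx_Fq N (A : 'M[C]_N) (x : 'cV[C]_N) :
  (adjmx x *m A *m x) 0 0 = Fq A (fun a => x a 0).
Proof.
rewrite /Fq mxE exchange_big /=; apply: eq_bigr => b _.
rewrite mxE mulr_suml; apply: eq_bigr => a _.
by rewrite /adjmx !mxE.
Qed.

Lemma herm_entry N (A : 'M[C]_N) : adjmx A = A -> forall a b, conjc (A a b) = A b a.
Proof. by move=> HA a b; rewrite -{2}HA /adjmx !mxE. Qed.

Lemma mulmx_diag m n (A : 'M[C]_(m, n)) (d : 'rV[C]_n) a b :
  (A *m diag_mx d) a b = A a b * d 0 b.
Proof.
rewrite mxE (bigD1 b) //= big1 => [|c ncb]; rewrite !mxE ?eqxx ?mulr1n ?addr0 //.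
by rewrite (negPf ncb) mulr0n mulr0.
Qed.

Lemma sinr_Fq N (Rk : 'M[C]_N) (h : 'cV[C]_N) (psi : 'I_N -> R) :
  (adjmx h *m ris_phase psi *m asym_HQ Rk psi h) 0 0
  = Fq Rk (fun a => expj (- psi a) * h a 0).
Proof.
rewrite /asym_HQ /ris_phase.
have -> : adjmx (diag_mx (\row_i expj (psi i))) = diag_mx (\row_i expj (- psi i)).
  apply/matrixP => a b; rewrite /adjmx !mxE.
  case: (eqVneq a b) => [->|nab] /=; rewrite ?mulr1n ?mulr0n.
    by rewrite /expj cosN sinN.
  by rewrite oppr0.
rewrite mxE /Fq; apply: eq_bigr => a _.
rewrite mulmx_diag mxE [X in _ * X]mxE mulr_sumr; apply: eq_bigr => b _.
rewrite mulmx_diag mxE /adjmx !mxE conjcM -expjN opprK.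
ring.
Qed.

Lemma Fq_ext N (A : 'M[C]_N) g g' : (forall a, g a = g' a) -> Fq A g = Fq A g'.
Proof.
move=> E; rewrite /Fq; apply: eq_bigr => a _; apply: eq_bigr => b _; by rewrite !E.
Qed.

Lemma Fq_split N (A : 'M[C]_N) (HA : forall a b, conjc (A a b) = A b a) g i :
  Fq A g = conjc (g i) * A i i * g i
         + conjc (g i) * (\sum_(b | b != i) A i b * g b)
         + conjc (\sum_(b | b != i) A i b * g b) * g i
         + \sum_(a | a != i) \sum_(b | b != i) conjc (g a) * A a b * g b.
Proof.
have E : forall a, \sum_b conjc (g a) * A a b * g b
   = conjc (g a) * A a i * g i + \sum_(b | b != i) conjc (g a) * A a b * g b.
  by move=> a; rewrite (bigD1 i).
rewrite /Fq (eq_bigr _ (fun a _ => E a)) (bigD1 i) //=.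
rewrite big_split /= mulr_sumr conjc_sum mulr_suml.
rewrite !addrA; congr (_ + _ + _ + _).
  by apply: eq_bigr => b _; rewrite mulrA.
by apply: eq_bigr => a _; rewrite conjcM HA [A a i * _]mulrC.
Qed.

Lemma Fq_conj N (A : 'M[C]_N) (HA : forall a b, conjc (A a b) = A b a) g :
  conjc (Fq A g) = Fq A g.
Proof.
rewrite /Fq conjc_sum.
under eq_bigr do rewrite conjc_sum.
rewrite exchange_big /=; apply: eq_bigr => b _; apply: eq_bigr => a _.
by rewrite !conjcM conjcKK HA; ring.
Qed.

Lemma conj_Im0 (z : C) : conjc z = z -> complex.Im z = 0.
Proof.
case: z => a b /= [] E; lra.
Qed.

Lemma norm_expj (a : R) : `|expj a| = 1.
Proof. by rewrite /expj; simpc; rewrite cos2Dsin2 sqrtr1. Qed.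

Lemma expjD (a b : R) : expj (a + b) = expj a * expj b.
Proof. by rewrite /expj cosD sinD; simpc; rewrite [X in _ +i* X]addrC. Qed.

Lemma expjNK (a : R) : expj (- a) * expj a = 1.
Proof. by rewrite -expjD addNr /expj cos0 sin0. Qed.

Lemma sqmod_real (x y : R) : sqmod (x%:C * y%:C) = (x * y) ^+ 2.
Proof. rewrite /sqmod /=. ring. Qed.


Lemma Fq_scale N (A : 'M[C]_N) (HA : forall a b, conjc (A a b) = A b a) g i w :
  conjc w * w = 1 ->
  Fq A (fun a => if a == i then w * g a else g a)
  = Fq A g + (conjc w - 1) * (conjc (g i) * \sum_(b | b != i) A i b * g b)
    + (w - 1) * conjc (conjc (g i) * \sum_(b | b != i) A i b * g b).
Proof.
move=> Hw.
rewrite (Fq_split HA _ i) (Fq_split HA g i) eqxx.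
have ES : \sum_(b | b != i) A i b * (if b == i then w * g b else g b)
        = \sum_(b | b != i) A i b * g b.
  by apply: eq_bigr => b hb; rewrite (negPf hb).
have ET : \sum_(a | a != i) \sum_(b | b != i)
     conjc (if a == i then w * g a else g a) * A a b * (if b == i then w * g b else g b)
   = \sum_(a | a != i) \sum_(b | b != i) conjc (g a) * A a b * g b.
  apply: eq_bigr => a ha; apply: eq_bigr => b hb; by rewrite (negPf ha) (negPf hb).
rewrite ES ET !conjcM conjcKK.
have -> : conjc w * conjc (g i) * A i i * (w * g i)
   = (conjc w * w) * (conjc (g i) * A i i * g i) by ring.
rewrite Hw mul1r; ring.
Qed.

Lemma real_key (r s : R) : (forall t : R, r * cos t + s * sin t <= r) -> s = 0 /\ 0 <= r.
Proof.
move=> H.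
have r0 : 0 <= r by have := H pi; rewrite cospi sinpi; lra.
split=> //.
have H' : forall t : R, 0 <= sin t -> r * cos t + `|s| * sin t <= r.
  move=> t st; case: (leP 0 s) => s0.
    by rewrite ger0_norm //.
  by rewrite ltr0_norm //; have := H (- t); rewrite cosN sinN; lra.
apply/eqP; apply/negPn/negP => sn0.
set a := `|s|.
have a0 : 0 < a by rewrite normr_gt0.
have a2 : a ^+ 2 = s ^+ 2 by rewrite /a real_normK // num_real.
set m := Num.sqrt (r ^+ 2 + s ^+ 2).
have m2 : m ^+ 2 = r ^+ 2 + s ^+ 2 by rewrite sqr_sqrtr // addr_ge0 // sqr_ge0.
have m0 : 0 <= m by apply: sqrtr_ge0.
have mpos : 0 < m by nra.
have rm : r <= m by nra.
set x := r / m.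
have x1 : -1 <= x <= 1.
  apply/andP; split; rewrite /x.
    by rewrite ler_pdivlMr //; nra.
  by rewrite ler_pdivrMr //; nra.
have cx : cos (acos x) = x by apply: acosK; rewrite in_itv /=.
have sx : sin (acos x) = Num.sqrt (1 - x ^+ 2) by apply: sin_acos.
set sg := sin (acos x).
have sg0 : 0 <= sg by rewrite /sg sx sqrtr_ge0.
have sg2 : sg ^+ 2 + x ^+ 2 = 1 by rewrite /sg -[in X in _ + X]cx addrC cos2Dsin2.
have Hx := H' (acos x) sg0.
rewrite cx -/sg in Hx.
have xm : x * m = r by rewrite /x mulrVK // unitfE gt_eqF.
set u := m * sg.
have u0 : 0 <= u by rewrite /u mulr_ge0.
have u2 : u ^+ 2 = a ^+ 2.
  rewrite a2 /u exprMn.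
  have -> : sg ^+ 2 = 1 - x ^+ 2 by lra.
  rewrite mulrBr mulr1 -exprMn [m * x]mulrC xm m2; ring.
have ua : u = a by nra.
have : r * r + a * u <= r * m.
  have := ler_wpM2r m0 Hx.
  have -> : (r * x + a * sg) * m = r * (x * m) + a * u by rewrite /u; ring.
  by rewrite xm.
rewrite ua; nra.
Qed.

Lemma expjJK (t : R) : conjc (expj t) * expj t = 1.
Proof. by rewrite -expjN expjNK. Qed.

Lemma Re_pert (t : R) (c : C) :
  complex.Re ((conjc (expj t) - 1) * c + (expj t - 1) * conjc c)
  = 2 * ((cos t - 1) * complex.Re c + sin t * complex.Im c).
Proof. case: c => a b; rewrite /expj /=. ring. Qed.

End S.

Theorem proposition1 (R : realType) (K N : nat) (k : 'I_K)
    (Rm : 'I_K -> 'M[R[i]]_N) (h1 : 'I_K -> 'cV[R[i]]_N)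
    (sigma2 : 'I_K -> R) (dkk : R)
    (HR : forall k', herm_psd (Rm k'))
    (Hsigma : forall k', 0 < sigma2 k')
    (Hd : 0 < dkk)
    (phi : 'I_N -> R)
    (Hmax : forall psi : 'I_N -> R,
        sinr_asym (Rm k) (h1 k) dkk (sigma2 k) psi
        <= sinr_asym (Rm k) (h1 k) dkk (sigma2 k) phi) :
  forall i : 'I_N,
    is_arg ((h1 k i 0)^* *
            \sum_(l < N) Rm k i l * expj (- phi l) * h1 k l 0)
           (- phi i).
Proof.
move=> i.
have HA : forall a b, conjc (Rm k a b) = Rm k b a := herm_entry (HR k).1.
pose v (psi : 'I_N -> R) := fun a => expj (- psi a) * h1 k a 0.
have Gim : forall psi, Fq (Rm k) (v psi) = (complex.Re (Fq (Rm k) (v psi)))%:C.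
  move=> psi; move: (conj_Im0 (Fq_conj HA (v psi))).
  by case: (Fq (Rm k) (v psi)) => a b /= ->.
have Gpos : forall g, 0 <= complex.Re (Fq (Rm k) g).
  move=> g; have := (HR k).2 (\col_a g a); rewrite mx_Fq.
  suff -> : Fq (Rm k) (fun a => (\col_a g a) a 0) = Fq (Rm k) g by [].
  by apply: Fq_ext => a; rewrite mxE.
have Hsinr : forall psi, sinr_asym (Rm k) (h1 k) dkk (sigma2 k) psi
    = (complex.Re (Fq (Rm k) (v psi)) * dkk) ^+ 2 / sigma2 k.
  move=> psi; rewrite /sinr_asym sinr_Fq.
  have -> : Fq (Rm k) (fun a => expj (- psi a) * h1 k a 0) = Fq (Rm k) (v psi) by [].
  by rewrite Gim sqmod_real.
have Gle : forall psi, complex.Re (Fq (Rm k) (v psi)) <= complex.Re (Fq (Rm k) (v phi)).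
  move=> psi; have := Hmax psi; rewrite !Hsinr.
  move=> /(ler_wpM2r (ltW (Hsigma k))); rewrite !divfK ?gt_eqF //.
  by move=> H; rewrite -(ler_pM2r Hd) -ler_sqr // nnegrE mulr_ge0 ?Gpos ?(ltW Hd).
pose g := v phi.
pose S := \sum_(b | b != i) Rm k i b * g b.
pose c := conjc (g i) * S.
have key : forall t, complex.Re c * cos t + complex.Im c * sin t <= complex.Re c.
  move=> t; pose psi0 := fun a => if a == i then phi a - t else phi a.
  have Ev : forall a, v psi0 a = if a == i then expj t * g a else g a.
    move=> a; rewrite /v /psi0 /g; case: (a == i) => //.
    by rewrite opprB expjD mulrA.
  have := Gle psi0; rewrite (Fq_ext _ Ev) (Fq_scale HA _ _ (expjJK t)) -/S -/c.
  rewrite -addrA raddfD /= Re_pert; lra.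
have [s0 r0] := real_key key.
have c0 : 0 <= c by rewrite lecE /= s0 eqxx r0.
have Rii : 0 <= Rm k i i.
  rewrite lecE (conj_Im0 (HA i i)) eqxx /=.
  have := Gpos (fun a => if a == i then 1 else 0).
  rewrite (Fq_split HA _ i) eqxx big1 => [|b hb]; last by rewrite (negPf hb) mulr0.
  rewrite big1 => [|a ha]; last by rewrite big1 // => b hb; rewrite (negPf ha) (negPf hb) conjc0 !mul0r.
  by rewrite conjc0 conjc1 !mulr0 !mul0r !mulr1 !mul1r !addr0.
have Eh : h1 k i 0 = expj (phi i) * g i.
  by rewrite /g /v mulrA -expjD addrN /expj cos0 sin0 mul1r.
have Esum : \sum_(l < N) Rm k i l * expj (- phi l) * h1 k l 0 = Rm k i i * g i + S.
  rewrite (bigD1 i) //=; rewrite /S /g /v -mulrA; congr (_ + _).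
  by apply: eq_bigr => b _; rewrite mulrA.
have u0 : 0 <= conjc (g i) * Rm k i i * g i + c.
  apply: addr_ge0 => //.
  have -> : conjc (g i) * Rm k i i * g i = Rm k i i * (g i * conjc (g i)) by ring.
  by apply: mulr_ge0 => //; apply: mulcJ_ge0.
have Ez : Num.conj (h1 k i 0) * \sum_(l < N) Rm k i l * expj (- phi l) * h1 k l 0
    = expj (- phi i) * (conjc (g i) * Rm k i i * g i + c).
  rewrite numconjE Esum Eh conjcM -expjN /c; ring.
rewrite /is_arg Ez normrM norm_expj mul1r (ger0_norm u0) mulrC.
by [].
Qed.
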